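(* Let $\beta\in(1/2,1)$, $\eta\in(0,1)$ and $a>0$, and assume the coupling below. There exist $c=c(\beta)>0$ and $n_0=n_0(\beta,\eta,a)$ such that for all $n\ge n_0$ and all $u\in[n^{\eta-1},1/2]$, \[ \Pr\Big(\sqrt n\big(\tilde F^{(0)}(u)-\mathbb E\tilde F^{(0)}(u)\big)>a\sqrt{u(1-u)}\Big)\le e^{-a c\, n^{\eta/2}}+e^{-n^{1-(\beta+1/2)/2}} . \]
   Context: $\epsilon_n=n^{-\beta}$. Coupling: $I\subset\{1,\dots,n\}$ random with each $i$ included independently with probability $\epsilon_n$; $Q^{(0)}_1,\dots,Q^{(0)}_n$ i.i.d. $\mathrm{Unif}(0,1)$ independent of $I$. Define $\tilde F^{(0)}(t)=\frac1n\sum_{i\in I}\mathbf 1(Q^{(0)}_i\le t)$ (normalized by $n$, though only $|I|$ terms appear), and $\mathbb E$ denotes unconditional expectation. *)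

(* Defs.v *)
From HB Require Import structures.
From mathcomp Require Import all_boot all_order all_algebra.
From mathcomp Require Import all_classical all_reals all_analysis.
Set Implicit Arguments. Unset Strict Implicit. Unset Printing Implicit Defensive.
Import Order.TTheory GRing.Theory Num.Theory.
Local Open Scope classical_set_scope.
Local Open Scope ring_scope.

(* The coupling on an abstract probability space P:
   J i = (i \in I), i.i.d. Bernoulli(eps); Q i i.i.d. Unif(0,1);
   all 2n variables mutually independent. *)
Definition coupling_indep d (T : measurableType d) (R : realType)
  (P : probability T R) (n : nat) (J : 'I_n -> T -> bool) (Q : 'I_n -> T -> R) :=
  forall (A : 'I_n -> set bool) (B : 'I_n -> set R),
    (forall i, measurable (A i)) -> (forall i, measurable (B i)) ->
    P (\bigcap_(i in [set: 'I_n]) (J i @^-1` A i `&` Q i @^-1` B i)) =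
    ((\prod_(i < n) (fine (P (J i @^-1` A i)) * fine (P (Q i @^-1` B i))))%:E).

Definition is_coupling d (T : measurableType d) (R : realType)
  (P : probability T R) (n : nat) (eps : R)
  (J : 'I_n -> T -> bool) (Q : 'I_n -> T -> R) : Prop :=
  [/\ (forall i, measurable_fun setT (J i)),
      (forall i, measurable_fun setT (Q i)),
      (forall i (A : set bool), measurable A -> P (J i @^-1` A) = bernoulli_prob eps A),
      (forall i (B : set R), measurable B -> P (Q i @^-1` B) = uniform_prob (@ltr01 R) B)
    & coupling_indep P J Q].

Definition Ftilde (T : Type) (R : realType) (n : nat)
  (J : 'I_n -> T -> bool) (Q : 'I_n -> T -> R) (w : T) (t : R) : R :=
  (#|[set i : 'I_n | J i w && (Q i w <= t)]|)%:R / n%:R.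

(* Main.v *)
Require Import Defs.
From HB Require Import structures.
From mathcomp Require Import all_boot all_order all_algebra.
From mathcomp Require Import all_classical all_reals all_analysis.
From mathcomp Require Import ring lra.
Import Order.TTheory GRing.Theory Num.Theory.
Local Open Scope classical_set_scope.
Local Open Scope ring_scope.



Lemma exists_sub (T : finType) (A : {set T}) k : (k <= #|A|)%N ->
  exists S : {set T}, S \subset A /\ #|S| = k.
Proof.
move=> kA; exists [set x in take k (enum A)]; split.
  by apply/fintype.subsetP => x; rewrite inE => /mem_take; rewrite mem_enum.
rewrite cardsE (card_uniqP _) ?size_take ?take_uniq ?enum_uniq // -cardE.
by case: ltnP => // h; apply/eqP; rewrite eqn_leq h kA.
Qed.

Lemma sub_bigU d (T : measurableType d) (R : realType) (mu : {measure set T -> \bar R})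
  (I : Type) (s : seq I) (p : pred I) (F : I -> set T) :
  (forall i, measurable (F i)) ->
  (mu (\big[setU/set0]_(i <- s | p i) F i) <= \sum_(i <- s | p i) mu (F i))%E.
Proof.
move=> mF; elim: s => [|x s IH]; first by rewrite !big_nil measure0.
rewrite !big_cons; case: ifPn => // px.
apply: le_trans (measureU2 _ _ _) _ => //; first exact: bigsetU_measurable.
exact: leeD.
Qed.

Lemma ffact_le_exp n k : (n ^_ k <= n ^ k)%N.
Proof.
elim: k => [|k IH]; first by rewrite ffactn0 expn0.
by rewrite ffactnSr expnSr leq_mul // leq_subr.
Qed.

Lemma powfact_le_expR (R : realType) (x : R) k : 0 <= x -> x ^+ k / k`!%:R <= expR x.
Proof.
move=> x0; case: k => [|k].
  have f1 : (0`! = 1)%N by [].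
  rewrite expr0 f1 divr1; apply: le_trans (expR_ge1Dxn 0 x0).
  have f2 : (1`! = 1)%N by [].
  by rewrite lerDl expr1 f2 divr1.
apply: le_trans (expR_ge1Dxn k x0); by rewrite lerDr.
Qed.

Lemma binom_bound (R : realType) (n k : nat) (x : R) : 0 <= x ->
  'C(n, k)%:R * x ^+ k <= expR (expR 1 * (n%:R * x) - k%:R).
Proof.
move=> x0.
have f0 : (0 < k`!%:R :> R) by rewrite ltr0n fact_gt0.
have h1 : ('C(n, k)%:R :> R) <= n%:R ^+ k / k`!%:R.
  rewrite ler_pdivlMr // -natrM bin_ffact -natrX ler_nat; exact: ffact_le_exp.
apply: le_trans (_ : n%:R ^+ k / k`!%:R * x ^+ k <= _).
  by rewrite ler_wpM2r // exprn_ge0.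
have m0 : 0 <= n%:R * x by rewrite mulr_ge0.
have := @powfact_le_expR R _ k (mulr_ge0 (expR_ge0 1) m0).
rewrite expRD expRN -[k%:R]mulr1 expRM_natl exprMn.
have e0 : 0 < expR (1 : R) ^+ k by rewrite exprn_gt0 // expR_gt0.
move=> h; rewrite ler_pdivlMr //.
apply: le_trans h; rewrite exprMn le_eqVlt; apply/orP; left; apply/eqP.
by ring.
Qed.

Lemma bern_true (R : realType) (p : R) : 0 <= p <= 1 ->
  bernoulli_prob p [set true] = p%:E.
Proof.
move=> p01; rewrite bernoulli_probE //= !diracE.
rewrite mem_set //= memNset //= ?mule1 ?mule0 ?adde0.
by [].
Qed.

Lemma unif_le (R : realType) (u : R) : 0 <= u <= 1 ->
  uniform_prob (@ltr01 R) `]-oo, u] = u%:E.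
Proof.
move=> /andP[u0 u1]; rewrite /uniform_prob integral_uniform_pdf.
have -> : `]-oo, u] `&` `[0, 1] = [set` `[0, u]] :> set R.
  apply/seteqP; split => x /=; rewrite !in_itv /=.
    by move=> [-> /andP[-> _]].
  move=> /andP[x0 xu]; split => //; rewrite x0 /=; exact: le_trans xu u1.
rewrite (eq_integral (cst 1%:E)); last first.
  move=> x; rewrite inE /= in_itv /= => /andP[x0 xu].
  rewrite /uniform_pdf x0 (le_trans xu u1) /=; congr EFin; have -> : (1 - 0 : R) = 1 by lra. by rewrite invr1.
rewrite integral_cst //= lebesgue_measure_itv /= lte_fin.
rewrite mul1e; case: ifPn => [_|]; first by rewrite oppr0 adde0.
by rewrite -leNgt => ?; apply/eqP; rewrite eq_le; apply/andP; split; rewrite lee_fin.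
Qed.

Lemma aux0 (R : realType) (u : R) : u <= 1/2 -> 0 <= 3/4 - u.
Proof. move=> h; lra. Qed.

Lemma aux1 (R : realType) (p u N : R) : p ^+ 2 <= u * N -> 0 <= u * N * (3/4 - u) ->
  p ^+ 2 * (1 / 4) <= u * (1 - u) * N.
Proof. move=> h1 h2. nra. Qed.
Lemma aux2 (R : realType) (e N eps u a : R) : 0 < u -> u <= 1/2 -> 0 < N ->
  8 * e ^+ 2 * (N * eps ^+ 2) <= a ^+ 2 ->
  2 ^+ 2 * (e ^+ 2 * (N ^+ 2 * (eps ^+ 2 * u ^+ 2))) <= a ^+ 2 * (u * (1 - u)) * N.
Proof.
move=> u0 uU N0 D.
have h : 0 <= N * u ^+ 2 by rewrite mulr_ge0 ?exprn_ge0 // ltW.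
have h2 : 8 * e ^+ 2 * (N * eps ^+ 2) * (N * u ^+ 2) <= a ^+ 2 * (N * u ^+ 2).
  by apply: ler_wpM2r.
have h3 : 0 <= a ^+ 2 * N * u * (1 - 2 * u).
  apply: mulr_ge0; last lra. apply: mulr_ge0; last lra. apply: mulr_ge0; last lra. exact: exprn_ge0 (ltW _) || by rewrite sqr_ge0.
nra.
Qed.
Lemma aux3 (R : realType) (x k a st p : R) : 0 < a -> a * st < k -> 2 * x <= a * st ->
  p / 2 <= st -> x - k <= -(a * (1/4) * p).
Proof. move=> a0 h1 h2 h3. have h4 : a * (p/2) <= a * st by rewrite ler_pM2l. nra. Qed.

Lemma numeric (R : realType) (beta eta a u : R) (n : nat) :
  1/2 < beta < 1 -> 0 < eta < 1 -> 0 < a ->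
  (8 * expR 1 ^+ 2 / a ^+ 2) `^ ((2 * beta - 1)^-1) < n%:R ->
  n%:R `^ (eta - 1) <= u <= 1/2 ->
  expR 1 * (n%:R * (n%:R `^ (-beta) * u))
    - ((Num.trunc (a * Num.sqrt (u * (1 - u)) * Num.sqrt n%:R)).+1)%:R
  <= - (a * (1/4) * n%:R `^ (eta/2)).
Proof.
move=> /andP[b1 b2] /andP[e0 e1] a0 XN /andP[uL uU].
set N : R := n%:R; set e := expR (1 : R); set eps := N `^ (-beta).
set s : R := Num.sqrt (u * (1 - u)); set t : R := Num.sqrt N.
set r := a * s * t; set p := N `^ (eta/2).
have e1pos : 0 < e by rewrite expR_gt0.
have Z0 : 0 < 8 * e ^+ 2 / a ^+ 2 by rewrite divr_gt0 ?exprn_gt0 ?mulr_gt0.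
have N0 : 0 < N.
  apply: le_lt_trans XN; exact: powR_ge0.
have u0 : 0 < u by apply: lt_le_trans uL; rewrite powR_gt0.
have eps0 : 0 <= eps by exact: powR_ge0.
have p0 : 0 <= p by exact: powR_ge0.
have s0 : 0 <= s by exact: sqrtr_ge0.
have t0 : 0 <= t by exact: sqrtr_ge0.
have s2 : s ^+ 2 = u * (1 - u) by rewrite sqr_sqrtr // mulr_ge0 //; lra.
have t2 : t ^+ 2 = N by rewrite sqr_sqrtr // ltW.
have p2 : p ^+ 2 <= u * N.
  rewrite -powR_mulrn ?powR_ge0 // /p -powRrM.
  have -> : eta / 2 * 2%:R = (eta - 1) + 1 by field.
  rewrite powRD; last by rewrite (gt_eqF N0) implybT.
  rewrite powRr1; last exact: ltW.
  by apply: ler_wpM2r => //; exact: ltW.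
have D : N * eps ^+ 2 <= a ^+ 2 / (8 * e ^+ 2).
  have Y : 8 * e ^+ 2 / a ^+ 2 <= N `^ (2 * beta - 1).
    have -> : 8 * e ^+ 2 / a ^+ 2 =
        ((8 * e ^+ 2 / a ^+ 2) `^ ((2 * beta - 1)^-1)) `^ (2 * beta - 1).
      rewrite -powRrM mulVf ?powRr1 ?ltW //; lra.
    apply: ge0_ler_powR; rewrite ?nnegrE ?powR_ge0 ?ltW //; lra.
  have -> : N * eps ^+ 2 = (N `^ (2 * beta - 1))^-1.
    rewrite -powRN /eps -powR_mulrn // -powRrM.
    rewrite -{1}(powRr1 (ltW N0)) -powRD; last by rewrite (gt_eqF N0) implybT.
    congr (_ `^ _); lra.
  by rewrite -invf_div lef_pV2 ?posrE // ?powR_gt0.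
have C1 : p / 2 <= s * t.
  rewrite -(ler_pXn2r (n:=2)) ?nnegrE ?mulr_ge0 ?divr_ge0 //.
  rewrite !exprMn s2 t2 (_ : 2^-1 ^+ 2 = 1/4 :> R); last by field.
  apply: aux1 => //; apply: mulr_ge0; [apply: mulr_ge0; exact: ltW|exact: aux0].
have C2 : 2 * (e * (N * (eps * u))) <= a * s * t.
  have u0' : 0 <= u by exact: ltW.
  have N0' : 0 <= N by exact: ltW.
  have a0' : 0 <= a by exact: ltW.
  rewrite -(ler_pXn2r (n:=2)) ?nnegrE ?mulr_ge0 //.
  rewrite !exprMn s2 t2.
  apply: aux2 => //.
  - by rewrite mulrC -ler_pdivlMr // mulr_gt0 // exprn_gt0.
  - exact: ltW.
have kr := truncnS_gt r.
apply: (@aux3 _ _ _ _ _ _ a0 _ _ C1); [by rewrite mulrA | by rewrite [a * (s * t)]mulrA].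
Qed.

Lemma in_bigsetU (T : Type) (I : eqType) (s : seq I) (p : pred I) (F : I -> set T) x w :
  x \in s -> p x -> F x w -> (\big[setU/set0]_(i <- s | p i) F i) w.
Proof.
elim: s => // y s IH; rewrite inE big_cons => /orP[/eqP<-|xs] px Fw.
  by rewrite px; left.
case: ifP => _; [right|]; exact: IH.
Qed.

Lemma aux4 (R : realType) (x c K t : R) : 0 < t -> 0 <= c ->
  x < t * (K / t ^+ 2 - c) -> x * t < K.
Proof.
move=> t0 c0 h.
have h2 : t * (K / t ^+ 2 - c) <= K / t.
  have -> : t * (K / t ^+ 2 - c) = K / t - t * c by field; rewrite gt_eqF.
  by rewrite lerBlDr lerDl mulr_ge0 // ltW.
by rewrite -ltr_pdivlMr //; exact: lt_le_trans h h2.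
Qed.

Theorem lemma11 (R : realType) (beta : R) :
  1 / 2 < beta < 1 ->
  exists c : R, 0 < c /\
  forall eta a : R, 0 < eta < 1 -> 0 < a ->
  exists n0 : nat, forall n : nat, (n0 <= n)%N ->
  forall (d : measure_display) (T : measurableType d) (P : probability T R)
         (J : 'I_n -> T -> bool) (Q : 'I_n -> T -> R),
  is_coupling P (n%:R `^ (- beta)) J Q ->
  forall u : R, n%:R `^ (eta - 1) <= u <= 1 / 2 ->
  (P [set w | (a * Num.sqrt (u * (1 - u)) <
      Num.sqrt n%:R * (Ftilde J Q w u - fine ('E_P[fun x => Ftilde J Q x u])))%R]
   <= (expR (- (a * c * n%:R `^ (eta / 2))) +
       expR (- (n%:R `^ (1 - (beta + 1 / 2) / 2))))%R%:E)%E.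

Proof.
move=> /andP[b1 b2].
exists (1/4); split; first by rewrite divr_gt0.
move=> eta a /andP[e0 e1] a0.
exists (Num.trunc ((8 * expR 1 ^+ 2 / a ^+ 2) `^ ((2 * beta - 1)^-1))).+1.
move=> n n0n d T P J Q [mJ mQ PJ PQ Hind] u /andP[uL uU].
have XN : (8 * expR 1 ^+ 2 / a ^+ 2) `^ ((2 * beta - 1)^-1) < n%:R.
  apply: lt_le_trans (truncnS_gt _) _; by rewrite ler_nat.
have N0 : 0 < (n%:R : R) by apply: le_lt_trans XN; exact: powR_ge0.
have u0 : 0 < u by apply: lt_le_trans uL; rewrite powR_gt0.
have u1 : u <= 1 by apply: le_trans uU _; rewrite ler_pdivrMr // mul1r ler1n.
have eps01 : 0 <= (n%:R : R) `^ (-beta) <= 1.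
  rewrite powR_ge0 /= -[leRHS](powRr0 (n%:R : R)); apply: ler_powR.
    by rewrite ler1n -(ltr0n R).
  rewrite oppr_le0; apply: le_trans (ltW b1); by rewrite divr_ge0.
set eps := (n%:R : R) `^ (-beta) in eps01 PJ *.
pose cnt := fun w => \sum_(i < n) (if J i w && (Q i w <= u) then 1 else 0 : R).
have FE : forall w, Ftilde J Q w u = cnt w / n%:R.
  move=> w; rewrite /Ftilde; congr (_ / _).
  rewrite -sum1_card natr_sum big_mkcond /=; apply: eq_bigr => i _.
  case: ifPn => [/set_mem /= ->|Hn] //; case: ifPn => // H.
  by exfalso; move/negP: Hn; apply; rewrite inE.
have mb : forall i, measurable_fun setT (fun w => J i w && (Q i w <= u)).
  move=> i; apply: measurable_and => //; exact: measurable_realfun.measurable_fun_ler (mQ i) (measurable_cst u).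
have mcnt : measurable_fun setT cnt.
  apply: measurable_sum => i; apply: measurable_fun_if => //; exact: measurable_cst.
have Ege : 0 <= fine ('E_P[fun x => Ftilde J Q x u]).
  apply: fine_ge0; apply: expectation_ge0 => w.
  by rewrite FE divr_ge0 // sumr_ge0 // => i _; case: ifP.
set c := fine _ in Ege *.
set sq := Num.sqrt (u * (1 - u)).
set Ev := [set w | _].
have mEv : measurable Ev.
  have mg : measurable_fun setT (fun w => Num.sqrt n%:R * (cnt w / n%:R - c)).
    apply: measurable_realfun.measurable_funM; first exact: measurable_cst.
    apply: measurable_realfun.measurable_funB; last exact: measurable_cst.
    by apply: measurable_realfun.measurable_funM => //; exact: measurable_cst.
  have -> : Ev = (fun w => Num.sqrt n%:R * (cnt w / n%:R - c)) @^-1` `]a * sq, +oo[.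
    by apply/seteqP; split => w /=; rewrite /Ev /= in_itv /= andbT FE.
  rewrite -[X in measurable X]setTI; by apply: mg => //.
pose A (S : {set 'I_n}) i : set bool := if i \in S then [set true] else setT.
pose B (S : {set 'I_n}) i : set R := if i \in S then [set` `]-oo, u]] else setT.
pose E S := \bigcap_(i in [set: 'I_n]) (J i @^-1` A S i `&` Q i @^-1` B S i).
have mA : forall S i, measurable (A S i) by move=> S i; rewrite /A; case: ifP.
have mB : forall S i, measurable (B S i).
  by move=> S i; rewrite /B; case: ifP => // _; exact: measurable_itv.
have mE : forall S, measurable (E S).
  move=> S; apply: fin_bigcap_measurable; first exact: finite_finset.
  move=> i _; apply: measurableI.
  - rewrite -[X in measurable X]setTI; by apply: (mJ i).
  - rewrite -[X in measurable X]setTI; by apply: (mQ i).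
have PE : forall S, P (E S) = ((eps * u) ^+ #|S|)%:E.
  move=> S; rewrite /E (Hind (A S) (B S) (mA S) (mB S)); congr EFin.
  rewrite (eq_bigr (fun i => if i \in S then eps * u else 1)); last first.
    move=> i _; rewrite /A /B; case: ifP => iS.
      by rewrite PJ // PQ ?bern_true ?unif_le ?u1 ?(ltW u0).
    by rewrite !preimage_setT probability_setT mulr1.
  by rewrite -big_mkcond /= prodr_const.
set r := a * sq * Num.sqrt n%:R.
set k := (Num.trunc r).+1.
have sub : Ev `<=` \big[setU/set0]_(S : {set 'I_n} | #|S| == k) E S.
  move=> w; rewrite /Ev /= /Ftilde => Hw.
  set K := #|_| in Hw.
  have t0 : 0 < Num.sqrt (n%:R : R) by rewrite sqrtr_gt0.
  have hK : r < K%:R.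
    rewrite /r; apply: (@aux4 _ _ _ _ _ t0 Ege); by rewrite sqr_sqrtr // ltW.
  have r0 : 0 <= r by rewrite /r !mulr_ge0 ?sqrtr_ge0 // ltW.
  have hk : (k <= K)%N by rewrite /k -(truncn_lt_nat _ r0) in hK.
  pose Aw := finset (fun i => J i w && (Q i w <= u)).
  have KA : K = #|Aw|.
    rewrite /K; apply: eq_card => i; rewrite finset.inE.
    apply/idP/idP => [/set_mem //|h]; exact: mem_set.
  rewrite KA in hk; have [S [SA Sk]] := @exists_sub _ _ _ hk.
  apply: (@in_bigsetU _ _ _ _ _ S); first exact: mem_index_enum.
    by rewrite Sk.
  move=> i _ /=; rewrite /A /B; case: ifPn => iS //=.
  have := fintype.subsetP SA i iS; rewrite finset.inE => /andP[-> Qu].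
  by split => //; rewrite /= in_itv /= Qu.
have mU : measurable (\big[setU/set0]_(S : {set 'I_n} | #|S| == k) E S).
  by apply: bigsetU_measurable => S _; exact: mE.
apply: le_trans (le_measure P (mem_set mEv) (mem_set mU) sub) _.
apply: le_trans (@sub_bigU _ _ _ P _ _ _ _ mE) _.
rewrite (eq_bigr (fun S => ((eps * u) ^+ k)%:E)); last first.
  by move=> S /eqP Sk; rewrite -Sk; exact: PE.
rewrite (sumEFin _ _ (fun _ => (eps * u) ^+ k)) lee_fin sumr_const -cardsE card_draws card_ord -[_ *+ 'C(n, k)]mulr_natl.
have x0 : 0 <= eps * u by apply: mulr_ge0; [by case/andP: eps01 | exact: ltW].
apply: le_trans (@binom_bound _ n k _ x0) _.
apply: le_trans (_ : expR (- (a * (1 / 4) * n%:R `^ (eta / 2))) <= _).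
  rewrite ler_expR; apply: numeric => //; [exact/andP | exact/andP | exact/andP].
by rewrite lerDl expR_ge0.
Qed.
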